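(* For $\gamma\ge0$ let $P_1(\gamma),P_2(\gamma),\dots$ be i.i.d. Poisson random variables with parameter $\gamma$. Let $x\in\mathbb{R}$, $\delta>0$, $\lambda\ge0$, $\epsilon>0$, and set $\lambda^-_\epsilon=\max\{0,\lambda-\epsilon\}$, $\lambda^+_\epsilon=\lambda+\epsilon$. Then for every $n\in\mathbb{N}$, $$\inf_{\gamma\in(\lambda-\epsilon,\lambda+\epsilon)\cap[0,\infty)}\mathbb{P}\Big(\tfrac1n\textstyle\sum_{i=1}^nP_i(\gamma)\in(x-\delta,x+\delta)\Big)=\inf_{\gamma\in C}\mathbb{P}\Big(\tfrac1n\textstyle\sum_{i=1}^nP_i(\gamma)\in(x-\delta,x+\delta)\Big),$$ where $C=\big((\lambda-\epsilon,\lambda+\epsilon)\cap[x-\delta,x+\delta]\cap[0,\infty)\big)\cup\{\lambda^-_\epsilon,\lambda^+_\epsilon\}$. *)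

(* Defs.v *)
From Stdlib Require Import Reals Lra Arith Factorial.
From Coquelicot Require Import Coquelicot.
Open Scope R_scope.

(* Poisson(gamma) probability mass function on nat. (0^0 = 1 in Stdlib.) *)
Definition poisson_pmf (gamma : R) (k : nat) : R :=
  exp (- gamma) * gamma ^ k / INR (Factorial.fact k).

(* Law of S_n = P_1 + ... + P_n for i.i.d. P_i ~ Poisson(gamma):
   the n-fold convolution of the Poisson pmf (law of a sum of independent
   variables = convolution of their laws).  S_0 = 0. *)
Fixpoint sum_pmf (n : nat) (gamma : R) (m : nat) : R :=
  match n with
  | O => if Nat.eqb m 0 then 1 else 0
  | S n' => sum_f_R0 (fun j => sum_pmf n' gamma (m - j)%nat * poisson_pmf gamma j) m
  end.

Definition prob_mean_in (n : nat) (gamma x delta : R) : R :=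
  Series (fun m =>
    if Rlt_dec (x - delta) (INR m / INR n) then
      if Rlt_dec (INR m / INR n) (x + delta) then sum_pmf n gamma m else 0
    else 0).

Definition inf_prob (A : R -> Prop) (n : nat) (x delta : R) : Rbar :=
  Glb_Rbar (fun y => exists gamma, A gamma /\ y = prob_mean_in n gamma x delta).

(* Main.v *)
Require Import Defs.
From Stdlib Require Import Reals Lra Lia Arith Factorial ZArith FunctionalExtensionality PropExtensionality.
From Coquelicot Require Import Coquelicot.
Open Scope R_scope.

Definition q (n : nat) (g : R) (m : nat) : R :=
  exp (- (INR n * g)) * (INR n * g) ^ m / INR (fact m).

Lemma sum_pmf_q n g m : sum_pmf n g m = q n g m.
Proof.
revert m; induction n as [|n IH]; intro m.
- unfold q; simpl. destruct m as [|m]; simpl.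
  + replace (- (0 * g)) with 0 by ring. rewrite exp_0. field.
  + lra.
- simpl sum_pmf. unfold q.
  replace (INR (S n) * g) with (g + INR n * g) by (rewrite S_INR; ring).
  rewrite binomial.
  unfold Rdiv. rewrite Rmult_comm. rewrite <- Rmult_assoc. rewrite (Rmult_comm _ (exp _)).
  rewrite scal_sum. apply sum_eq. intros i Hi.
  rewrite IH. unfold q, poisson_pmf, Binomial.C.
  replace (- (g + INR n * g)) with (- (INR n * g) + - g) by ring.
  rewrite exp_plus.
  pose proof (INR_fact_neq_0 i). pose proof (INR_fact_neq_0 (m - i)).
  pose proof (INR_fact_neq_0 m).
  field. auto.
Qed.

Lemma series_fin (a : nat -> R) N : (forall k, (N < k)%nat -> a k = 0) ->
  Series a = sum_f_R0 a N.
Proof.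
intro H. apply is_series_unique. unfold is_series.
apply filterlim_ext_loc with (fun _ => sum_f_R0 a N).
- exists N. intros k Hk. rewrite sum_n_Reals. symmetry.
  induction Hk as [|k Hk IHk]; auto.
  simpl. rewrite IHk, H; [ring|lia].
- apply filterlim_const.
Qed.

Lemma arch_nat r : exists N : nat, r < INR N.
Proof.
destruct (archimed r) as [H1 _].
destruct (Z_lt_le_dec (up r) 0) as [Hz|Hz].
- exists 0%nat. simpl. apply IZR_lt in Hz. lra.
- exists (Z.to_nat (up r)). rewrite INR_IZR_INZ. rewrite Z2Nat.id; auto.
Qed.

Definition hf (m : nat) (c : R) := exp (- c) * c ^ m.

Lemma hf_der m c : derivable_pt_lim (hf m) c (exp (-c) * (INR m * c ^ pred m - c ^ m)).
Proof.
apply is_derive_Reals. unfold hf. auto_derive; auto. ring.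
Qed.

Lemma hf_inc m a b : 0 <= a <= b -> b <= INR m -> hf m a <= hf m b.
Proof.
intros Hab Hbm. destruct (Rle_lt_or_eq_dec a b) as [Hlt|Heq]; [lra| |subst; lra].
destruct (MVT_cor2 (hf m) _ a b Hlt (fun c _ => hf_der m c)) as [c [Hc Hc2]].
assert (0 <= exp (- c) * (INR m * c ^ pred m - c ^ m) * (b - a)); [|lra].
apply Rmult_le_pos; [|lra]. apply Rmult_le_pos; [left; apply exp_pos|].
destruct m as [|k]. { simpl in Hbm. lra. }
simpl pred. simpl pow. 
assert (0 <= c ^ k) by (apply pow_le; lra).
replace (INR (S k) * c ^ k - c * c ^ k) with ((INR (S k) - c) * c ^ k) by ring.
apply Rmult_le_pos; lra.
Qed.

Lemma hf_dec m a b : INR m <= a <= b -> hf m b <= hf m a.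
Proof.
intros Hab. pose proof (pos_INR m).
destruct (Rle_lt_or_eq_dec a b) as [Hlt|Heq]; [lra| |subst; lra].
destruct (MVT_cor2 (hf m) _ a b Hlt (fun c _ => hf_der m c)) as [c [Hc Hc2]].
assert (exp (- c) * (INR m * c ^ pred m - c ^ m) * (b - a) <= 0); [|lra].
rewrite Rmult_assoc. rewrite <- (Rmult_0_r (exp (-c))).
apply Rmult_le_compat_l; [left; apply exp_pos|].
assert (INR m * c ^ pred m - c ^ m <= 0); [|nra].
destruct m as [|k]. { simpl. lra. }
simpl pred. simpl pow.
assert (0 <= c ^ k) by (apply pow_le; lra).
replace (INR (S k) * c ^ k - c * c ^ k) with ((INR (S k) - c) * c ^ k) by ring.
nra.
Qed.

Lemma q_hf n g m : q n g m = hf m (INR n * g) / INR (fact m).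
Proof. reflexivity. Qed.

Lemma q_inc n m g1 g2 : 0 <= g1 <= g2 -> INR n * g2 <= INR m -> q n g1 m <= q n g2 m.
Proof.
intros H1 H2. rewrite !q_hf. pose proof (pos_INR n).
apply Rmult_le_compat_r. left; apply Rinv_0_lt_compat, INR_fact_lt_0.
apply hf_inc; auto. split; [nra|]. apply Rmult_le_compat_l; lra.
Qed.

Lemma q_dec n m g1 g2 : 0 <= g1 <= g2 -> INR m <= INR n * g1 -> q n g2 m <= q n g1 m.
Proof.
intros H1 H2. rewrite !q_hf. pose proof (pos_INR n).
apply Rmult_le_compat_r. left; apply Rinv_0_lt_compat, INR_fact_lt_0.
apply hf_dec; auto. split; auto. apply Rmult_le_compat_l; lra.
Qed.

Section S.
Variables (n : nat) (x d : R).
Definition T (g : R) (m : nat) : R :=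
  if Rlt_dec (x - d) (INR m / INR n) then
    if Rlt_dec (INR m / INR n) (x + d) then q n g m else 0 else 0.

Lemma mul_lt_div a m : 0 < INR n -> a < INR m / INR n -> INR n * a < INR m.
Proof.
intros Hn H. replace (INR m) with (INR n * (INR m / INR n)) by (field; lra).
apply Rmult_lt_compat_l; auto.
Qed.

Lemma div_lt_mul a m : 0 < INR n -> INR m / INR n < a -> INR m < INR n * a.
Proof.
intros Hn H. replace (INR m) with (INR n * (INR m / INR n)) by (field; lra).
apply Rmult_lt_compat_l; auto.
Qed.

Lemma prob_eq : (1 <= n)%nat -> exists N, forall g, prob_mean_in n g x d = sum_f_R0 (T g) N.
Proof.
intro Hn1. assert (Hn : 0 < INR n) by (apply lt_0_INR; lia).
destruct (arch_nat (INR n * (x + d))) as [N HN].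
exists N. intro g. unfold prob_mean_in. rewrite (series_fin _ N).
{ apply sum_eq. intros i _. unfold T. rewrite sum_pmf_q. reflexivity. }
intros k Hk.
destruct (Rlt_dec _ _); auto. destruct (Rlt_dec _ _) as [h|h]; auto.
apply div_lt_mul in h; auto. apply lt_INR in Hk. lra.
Qed.

Lemma sum_T_der N g0 : ex_derive (fun g => sum_f_R0 (T g) N) g0.
Proof.
induction N as [|N IH].
- simpl. unfold T. destruct (Rlt_dec _ _); [destruct (Rlt_dec _ _)|].
  + unfold q. auto_derive. auto.
  + apply ex_derive_const.
  + apply ex_derive_const.
- simpl. apply (ex_derive_plus (fun g => sum_f_R0 (T g) N) (fun g => T g (S N))); auto.
  unfold T. destruct (Rlt_dec _ _); [destruct (Rlt_dec _ _)|].
  + unfold q. auto_derive. auto.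
  + apply ex_derive_const.
  + apply ex_derive_const.
Qed.

Lemma sum_T_cont N g0 : continuity_pt (fun g => sum_f_R0 (T g) N) g0.
Proof.
apply continuity_pt_filterlim.
exact (ex_derive_continuous (fun g => sum_f_R0 (T g) N) g0 (sum_T_der N g0)).
Qed.

Lemma sum_T_inc N g1 g2 : (1 <= n)%nat -> 0 <= g1 <= g2 -> g2 < x - d ->
  sum_f_R0 (T g1) N <= sum_f_R0 (T g2) N.
Proof.
intros Hn1 H1 H2. assert (Hn : 0 < INR n) by (apply lt_0_INR; lia).
apply sum_Rle. intros m _. unfold T.
destruct (Rlt_dec _ _) as [h|h]; [destruct (Rlt_dec _ _)|]; try lra.
apply q_inc; auto. apply mul_lt_div in h; auto.
assert (INR n * g2 <= INR n * (x - d)) by (apply Rmult_le_compat_l; lra). lra.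
Qed.

Lemma sum_T_dec N g1 g2 : (1 <= n)%nat -> 0 <= g1 <= g2 -> x + d < g1 ->
  sum_f_R0 (T g2) N <= sum_f_R0 (T g1) N.
Proof.
intros Hn1 H1 H2. assert (Hn : 0 < INR n) by (apply lt_0_INR; lia).
apply sum_Rle. intros m _. unfold T.
destruct (Rlt_dec _ _) as [h|h]; [destruct (Rlt_dec _ _) as [h'|h']|]; try lra.
apply q_dec; auto. apply div_lt_mul in h'; auto.
assert (INR n * (x + d) <= INR n * g1) by (apply Rmult_le_compat_l; lra). lra.
Qed.
End S.

Lemma cont_approx f g0 eta : continuity_pt f g0 -> 0 < eta ->
  exists al, 0 < al /\ forall g, Rabs (g - g0) < al -> f g < f g0 + eta.
Proof.
intros Hc He. destruct (Hc eta He) as [al [Hal H]].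
exists al. split; auto. intros g Hg.
destruct (Req_dec g g0) as [->|Hne]; [lra|].
assert (R_dist (f g) (f g0) < eta).
{ apply H. split; [split; [exact I|auto]|]. simpl. unfold R_dist. auto. }
unfold R_dist in H0. apply Rabs_def2 in H0. lra.
Qed.

Lemma glb_le (E : R -> Prop) y : E y -> Rbar_le (Glb_Rbar E) y.
Proof. intro H. destruct (Glb_Rbar_correct E) as [H1 _]. apply H1; auto. Qed.

Lemma le_glb (E : R -> Prop) l : (forall y, E y -> Rbar_le l y) -> Rbar_le l (Glb_Rbar E).
Proof. intro H. destruct (Glb_Rbar_correct E) as [_ H2]. apply H2. intros y Hy; auto. Qed.

Lemma closure_le (A : R -> Prop) (f : R -> R) g0 :
  continuity_pt f g0 ->
  (forall al, 0 < al -> exists g, A g /\ Rabs (g - g0) < al) ->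
  Rbar_le (Glb_Rbar (fun y => exists g, A g /\ y = f g)) (f g0).
Proof.
intros Hc Hcl.
assert (Hlb : forall g, A g -> Rbar_le (Glb_Rbar (fun y => exists g, A g /\ y = f g)) (f g)).
{ intros g Hg. apply glb_le. eauto. }
destruct (Glb_Rbar (fun y => exists g, A g /\ y = f g)) as [l| |] eqn:E.
- simpl. apply Rnot_lt_le. intro Hlt.
  destruct (cont_approx f g0 (l - f g0) Hc) as [al [Hal H]]; [lra|].
  destruct (Hcl al Hal) as [g [Hg Hg2]].
  specialize (Hlb g Hg). simpl in Hlb. specialize (H g Hg2). lra.
- destruct (Hcl 1 Rlt_0_1) as [g [Hg _]]. specialize (Hlb g Hg). simpl in Hlb. contradiction.
- simpl. exact I.
Qed.

Theorem proposition3 (x delta lambda eps : R) (n : nat) :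
  0 < delta -> 0 <= lambda -> 0 < eps -> (1 <= n)%nat ->
  inf_prob (fun g => lambda - eps < g < lambda + eps /\ 0 <= g) n x delta =
  inf_prob (fun g =>
      (lambda - eps < g < lambda + eps /\ x - delta <= g <= x + delta /\ 0 <= g)
      \/ g = Rmax 0 (lambda - eps) \/ g = lambda + eps) n x delta.
Proof.
intros Hd Hl He Hn.
destruct (prob_eq n x delta Hn) as [N HN].
unfold inf_prob.
set (f := fun g => sum_f_R0 (T n x delta g) N).
assert (Hf : forall g, prob_mean_in n g x delta = f g) by (intro; apply HN).
assert (HE : forall P : R -> Prop, (fun y => exists g, P g /\ y = prob_mean_in n g x delta)
           = (fun y => exists g, P g /\ y = f g)).
{ intro P. apply functional_extensionality. intro y.
  apply propositional_extensionality. split; intros [g [Hg ->]]; exists g; rewrite Hf; auto. }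
rewrite !HE.
assert (Hc : forall g0, continuity_pt f g0) by (intro; apply sum_T_cont).
apply Rbar_le_antisym.
- apply le_glb. intros y [g [Hg ->]].
  destruct Hg as [[H1 [H2 H3]] | [Hg | Hg]].
  + apply glb_le. exists g. split; [repeat split; lra|reflexivity].
  + destruct (Rlt_le_dec (lambda - eps) 0) as [Hneg|Hpos].
    * apply glb_le. exists g. rewrite Rmax_left in Hg by lra. subst. split; [repeat split; lra|reflexivity].
    * rewrite Rmax_right in Hg by lra. subst g.
      apply closure_le; auto. intros al Hal.
      exists (lambda - eps + Rmin al eps / 2).
      pose proof (Rmin_l al eps). pose proof (Rmin_r al eps).
      assert (0 < Rmin al eps) by (apply Rmin_pos; auto).
      split; [repeat split; lra|]. rewrite Rabs_right; lra.
  + subst g. apply closure_le; auto. intros al Hal.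
    exists (lambda + eps - Rmin al eps / 2).
    pose proof (Rmin_l al eps). pose proof (Rmin_r al eps).
    assert (0 < Rmin al eps) by (apply Rmin_pos; auto).
    split; [repeat split; lra|]. rewrite Rabs_left; lra.
- apply le_glb. intros y [g [[H1 H2] ->]].
  destruct (Rlt_le_dec g (x - delta)) as [Hlo|Hlo].
  + apply Rbar_le_trans with (f (Rmax 0 (lambda - eps))).
    * apply glb_le. eexists; split; [right; left; reflexivity|reflexivity].
    * simpl. apply sum_T_inc; auto. split; [apply Rmax_l|]. apply Rmax_lub; lra.
  + destruct (Rle_lt_dec g (x + delta)) as [Hhi|Hhi].
    * apply glb_le. exists g. split; [left; repeat split; lra|reflexivity].
    * apply Rbar_le_trans with (f (lambda + eps)).
      -- apply glb_le. eexists; split; [right; right; reflexivity|reflexivity].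
      -- simpl. apply sum_T_dec; auto. lra.
Qed.
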